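(* Let $\mathsf{SafeInstance} \subseteq \mathbb{N}$ contain at least two elements. Then there is no metalanguage capturing the property $\psi(g)$: ''$g$ halts on every input and outputs an element of $\mathsf{SafeInstance}$'', i.e. $\psi(g) \leftrightarrow \forall x\,(\varphi_g(x)\downarrow \wedge \varphi_g(x) \in \mathsf{SafeInstance})$.
   Context: Programs (generators) are identified with natural numbers in a fixed universal programming language; $\varphi_g$ is the partial computable function computed by $g$ and $\varphi_g(x)\downarrow$ means $g$ halts on $x$. A metalanguage $L \subseteq \mathbb{N}$ captures a property $\psi$ if $L$ is decidable, every $g \in L$ satisfies $\psi$, and for every $g' \in \mathbb{N}$ satisfying $\psi$ there is $g \in L$ with $\varphi_g = \varphi_{g'}$. *)

(* Defs.v *)
From Stdlib Require Import Arith Cantor.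
From mathcomp Require Import ssreflect ssrfun ssrbool eqtype ssrnat seq choice.

Set Implicit Arguments.
Unset Strict Implicit.

(* A fixed universal programming language: unary partial recursive          *)
(* functions on nat, with tuples encoded by the Cantor pairing of           *)
(* Stdlib.Arith.Cantor (pair x y := Cantor.to_nat (x, y)).                  *)

Definition cpair (x y : nat) : nat := Cantor.to_nat (x, y).
Definition cfst (n : nat) : nat := fst (Cantor.of_nat n).
Definition csnd (n : nat) : nat := snd (Cantor.of_nat n).

Inductive prog : Type :=
  | PZero
  | PSucc
  | PId
  | PFst
  | PSnd
  | PComp of prog & prog
  | PPair of prog & prog
  | PRec of prog & prog
  | PMu of prog.

(* PRec f g on input <n,y>:  R 0 = f y,  R (n+1) = g <<n, R n>, y>. *)
Inductive eval : prog -> nat -> nat -> Prop :=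
  | ev_zero x : eval PZero x 0
  | ev_succ x : eval PSucc x (S x)
  | ev_id x : eval PId x x
  | ev_fst x : eval PFst x (cfst x)
  | ev_snd x : eval PSnd x (csnd x)
  | ev_comp f g x u v : eval g x u -> eval f u v -> eval (PComp f g) x v
  | ev_pair f g x a b : eval f x a -> eval g x b -> eval (PPair f g) x (cpair a b)
  | ev_rec f g x v : evalrec f g (cfst x) (csnd x) v -> eval (PRec f g) x v
  | ev_mu f x n :
      eval f (cpair n x) 0 ->
      (forall m, m < n -> exists k, eval f (cpair m x) (S k)) ->
      eval (PMu f) x n
with evalrec : prog -> prog -> nat -> nat -> nat -> Prop :=
  | evr_0 f g y v : eval f y v -> evalrec f g 0 y v
  | evr_S f g n y r v :
      evalrec f g n y r -> eval g (cpair (cpair n r) y) v ->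
      evalrec f g (S n) y v.

(* Goedel numbering: programs are coded as generic trees, which MathComp     *)
(* numbers bijectively-onto-their-image via pickle/unpickle.  Every natural  *)
(* number denotes a program (junk codes denote PZero), and every program has *)
(* a code.                                                                   *)

Fixpoint prog_to_tree (p : prog) : GenTree.tree nat :=
  match p with
  | PZero => GenTree.Node 0 [::]
  | PSucc => GenTree.Node 1 [::]
  | PId => GenTree.Node 2 [::]
  | PFst => GenTree.Node 3 [::]
  | PSnd => GenTree.Node 4 [::]
  | PComp f g => GenTree.Node 5 [:: prog_to_tree f; prog_to_tree g]
  | PPair f g => GenTree.Node 6 [:: prog_to_tree f; prog_to_tree g]
  | PRec f g => GenTree.Node 7 [:: prog_to_tree f; prog_to_tree g]
  | PMu f => GenTree.Node 8 [:: prog_to_tree f]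
  end.

Fixpoint tree_to_prog (t : GenTree.tree nat) : option prog :=
  match t with
  | GenTree.Leaf _ => None
  | GenTree.Node n ts =>
    match n, ts with
    | 0, [::] => Some PZero
    | 1, [::] => Some PSucc
    | 2, [::] => Some PId
    | 3, [::] => Some PFst
    | 4, [::] => Some PSnd
    | 5, [:: a; b] =>
        match tree_to_prog a, tree_to_prog b with
        | Some f, Some g => Some (PComp f g) | _, _ => None end
    | 6, [:: a; b] =>
        match tree_to_prog a, tree_to_prog b with
        | Some f, Some g => Some (PPair f g) | _, _ => None end
    | 7, [:: a; b] =>
        match tree_to_prog a, tree_to_prog b with
        | Some f, Some g => Some (PRec f g) | _, _ => None end
    | 8, [:: a] =>
        match tree_to_prog a with Some f => Some (PMu f) | None => None end
    | _, _ => None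
    end
  end.

Lemma prog_to_treeK : pcancel prog_to_tree tree_to_prog.
Proof. by elim=> //= f -> // g ->. Qed.

Definition prog_of (g : nat) : prog :=
  match unpickle g with
  | Some t => odflt PZero (tree_to_prog t)
  | None => PZero
  end.

Definition phi (g x v : nat) : Prop := eval (prog_of g) x v.

Definition halts (g x : nat) : Prop := exists v, phi g x v.

Definition same_fun (g g' : nat) : Prop := forall x v, phi g x v <-> phi g' x v.

Definition decidable_set (L : nat -> Prop) : Prop :=
  exists d, forall g, (L g -> phi d g 1) /\ (~ L g -> phi d g 0).

Definition captures (L : nat -> Prop) (psi : nat -> Prop) : Prop :=
  decidable_set L /\
  (forall g, L g -> psi g) /\
  (forall g', psi g' -> exists g, L g /\ same_fun g g').

Definition total_into (Safe : nat -> Prop) (g : nat) : Prop :=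
  forall x, halts g x /\ (forall v, phi g x v -> Safe v).

(* Main.v *)
Require Import Defs.
From Stdlib Require Import Arith Cantor ClassicalEpsilon.
From mathcomp Require Import ssreflect ssrfun ssrbool eqtype ssrnat seq choice.
Set Implicit Arguments.
Unset Strict Implicit.


Lemma cfst_pair a b : cfst (cpair a b) = a.
Proof. by rewrite /cfst /cpair Cantor.cancel_of_to. Qed.
Lemma csnd_pair a b : csnd (cpair a b) = b.
Proof. by rewrite /csnd /cpair Cantor.cancel_of_to. Qed.
Lemma cpair_ge a b : a + b <= cpair a b.
Proof. apply/leP. rewrite /cpair addnC. exact: Cantor.to_nat_non_decreasing. Qed.
Arguments cfst : simpl never.
Arguments csnd : simpl never.
Arguments cpair : simpl never.

Definition cmp (f : nat -> nat) := exists p, forall x, eval p x (f x).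

Inductive tm : Type :=
 | TEnv | TZ | TS of tm | TPred of tm | TPair of tm & tm | TFst of tm | TSnd of tm
 | TIf of tm & tm & tm
 | TIter of tm & tm & (nat -> nat)
 | TLet of tm & tm
 | TApp of (nat -> nat) & tm.

Fixpoint sem (t : tm) (e : nat) : nat :=
  match t with
  | TEnv => e
  | TZ => 0
  | TS t => S (sem t e)
  | TPred t => (sem t e).-1
  | TPair a b => cpair (sem a e) (sem b e)
  | TFst t => cfst (sem t e)
  | TSnd t => csnd (sem t e)
  | TIf c a b => if sem c e is 0 then sem a e else sem b e
  | TIter c i f => iter (sem c e) f (sem i e)
  | TLet a t => sem t (sem a e)
  | TApp f t => f (sem t e)
  end.

Fixpoint ok (t : tm) : Prop :=
  match t with
  | TEnv | TZ => True
  | TS t | TPred t | TFst t | TSnd t => ok t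
  | TPair a b | TLet a b => ok a /\ ok b
  | TIf c a b => ok c /\ ok a /\ ok b
  | TIter c i f => ok c /\ ok i /\ cmp f
  | TApp f t => cmp f /\ ok t
  end.

Fixpoint recv (f : nat -> nat) (g : nat -> nat -> nat -> nat) (n y : nat) : nat :=
  match n with 0 => f y | S n => g n (recv f g n y) y end.

Lemma evalrec_gen F G f g :
  (forall y, eval F y (f y)) ->
  (forall n r y, eval G (cpair (cpair n r) y) (g n r y)) ->
  forall n y, evalrec F G n y (recv f g n y).
Proof.
move=> HF HG; elim=> [|n IH] y /=; first by constructor.
by econstructor; [exact: IH| exact: HG].
Qed.

Lemma eval_prec F G f g x :
  (forall y, eval F y (f y)) ->
  (forall n r y, eval G (cpair (cpair n r) y) (g n r y)) ->
  eval (PRec F G) x (recv f g (cfst x) (csnd x)).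
Proof. by move=> HF HG; constructor; apply: evalrec_gen. Qed.

Lemma cmp_tm t : ok t -> cmp (sem t).
Proof.
elim: t => /=.
- by move=> _; exists PId => x; constructor.
- by move=> _; exists PZero => x; constructor.
- move=> t IH /IH [p Hp]; exists (PComp PSucc p) => x; econstructor; [exact: Hp| constructor].
- move=> t IH /IH [p Hp].
  exists (PComp (PRec PZero (PComp PFst PFst)) (PPair p PId)) => x.
  econstructor; first by econstructor; [exact: Hp | constructor].
  have := @eval_prec PZero (PComp PFst PFst) (fun _ => 0) (fun n _ _ => n) (cpair (sem t x) x).
  rewrite cfst_pair csnd_pair; have -> : recv (fun _ => 0) (fun n _ _ => n) (sem t x) x = (sem t x).-1.
    by case: (sem t x).
  apply; first by move=> y; constructor.
  move=> n r y; econstructor; first by constructor.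
  by rewrite -{2}[n](cfst_pair n r) -{2}[cpair n r](cfst_pair _ y); constructor.
- move=> a IHa b IHb [/IHa [pa Ha] /IHb [pb Hb]]; exists (PPair pa pb) => x; by constructor.
- move=> t IH /IH [p Hp]; exists (PComp PFst p) => x; econstructor; [exact: Hp| constructor].
- move=> t IH /IH [p Hp]; exists (PComp PSnd p) => x; econstructor; [exact: Hp| constructor].
- move=> c IHc a IHa b IHb [/IHc [pc Hc] [/IHa [pa Ha] /IHb [pb Hb]]].
  exists (PComp (PRec pa (PComp pb PSnd)) (PPair pc PId)) => x.
  econstructor; first by econstructor; [exact: Hc | constructor].
  have := @eval_prec pa (PComp pb PSnd) (sem a) (fun _ _ y => sem b y) (cpair (sem c x) x).
  rewrite cfst_pair csnd_pair.
  have -> : recv (sem a) (fun _ _ y => sem b y) (sem c x) x = (if sem c x is 0 then sem a x else sem b x).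
    by case: (sem c x).
  apply; first by [].
  move=> n r y; econstructor; first by constructor.
  by rewrite csnd_pair.
- move=> c IHc i IHi f [/IHc [pc Hc] [/IHi [pi Hi] [pf Hf]]].
  exists (PComp (PRec pi (PComp pf (PComp PSnd PFst))) (PPair pc PId)) => x.
  econstructor; first by econstructor; [exact: Hc | constructor].
  have := @eval_prec pi (PComp pf (PComp PSnd PFst)) (sem i) (fun _ r _ => f r) (cpair (sem c x) x).
  rewrite cfst_pair csnd_pair.
  have -> : recv (sem i) (fun _ r _ => f r) (sem c x) x = iter (sem c x) f (sem i x).
    by elim: (sem c x) => //= n ->.
  apply; first by [].
  move=> n r y; econstructor; last exact: Hf.
  econstructor; first by constructor.
  by rewrite cfst_pair -{2}[r](csnd_pair n r); constructor.
- move=> a IHa t IHt [/IHa [pa Ha] /IHt [pt Ht]].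
  by exists (PComp pt pa) => x; econstructor; [exact: Ha| exact: Ht].
- move=> f t IHt [[pf Hf] /IHt [pt Ht]].
  by exists (PComp pf pt) => x; econstructor; [exact: Ht| exact: Hf].
Qed.



Fixpoint K n := match n with 0 => TZ | S n => TS (K n) end.
Lemma semK n e : sem (K n) e = n. Proof. by elim: n => //= n ->. Qed.
Lemma okK n : ok (K n). Proof. by elim: n. Qed.

Definition econs h t := S (cpair h t).
Definition enc_list (l : seq nat) := foldr econs 0 l.
Definition THd t := TFst (TPred t).
Definition TTl t := TSnd (TPred t).
Definition TCons h t := TS (TPair h t).

Lemma enc_list_size l : size l <= enc_list l.
Proof. elim: l => //= h t IH; rewrite /econs ltnS (leq_trans IH) //.
 by rewrite (leq_trans _ (cpair_ge h _)) // leq_addl. Qed.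

Definition X0 := TFst TEnv.
Definition X1 := TFst (TSnd TEnv).
Definition X2 := TFst (TSnd (TSnd TEnv)).
Definition X3 := TFst (TSnd (TSnd (TSnd TEnv))).
Definition X4 := TSnd (TSnd (TSnd (TSnd TEnv))).
Definition Y1 := TSnd TEnv.
Definition Y2 := TSnd (TSnd TEnv).
Definition Y3 := TSnd (TSnd (TSnd TEnv)).

Definition mk5 a b c d e := TPair a (TPair b (TPair c (TPair d e))).
Definition st5 a b c d e := cpair a (cpair b (cpair c (cpair d e))).
Lemma cfst0 : cfst 0 = 0. Proof. by []. Qed.
Lemma csnd0 : csnd 0 = 0. Proof. by []. Qed.
Fixpoint TCaseN (t : tm) (bs : seq tm) (d : tm) : tm :=
  match bs with [::] => d | b :: bs => TIf t b (TCaseN (TPred t) bs d) end.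
Ltac simp := repeat progress (rewrite ?cfst_pair ?csnd_pair ?cfst0 ?csnd0;
  cbn [sem TTl THd TCons K X0 X1 X2 X3 X4 Y1 Y2 Y3 mk5 st5 TCaseN econs enc_list predn foldr map]).

Definition predf := sem (TPred TEnv).
Arguments predf : simpl never.
Lemma cmp_predf : cmp predf. Proof. exact: cmp_tm. Qed.
Definition subf := sem (TIter (TSnd TEnv) (TFst TEnv) predf).
Arguments subf : simpl never.
Lemma cmp_subf : cmp subf. Proof. apply: cmp_tm => /=; split => //; split => //; exact cmp_predf. Qed.
Lemma subfE x y : subf (cpair x y) = x - y.
Proof. rewrite /subf /=; simp. elim: y => [|y IH]; first by rewrite subn0.
 by rewrite iterS IH /predf /= subnS. Qed.

Definition lstepT (F : nat -> nat) :=
  TIf X0 TEnv (TPair (TTl X0) (TApp F (TPair (THd X0) Y1))).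
Definition lstep F := sem (lstepT F).
Arguments lstep : simpl never.
Lemma cmp_lstep F : cmp F -> cmp (lstep F).
Proof. by move=> H; apply: cmp_tm. Qed.

Lemma lfold F l a k : size l <= k ->
  iter k (lstep F) (cpair (enc_list l) a) = cpair 0 (foldl (fun acc h => F (cpair h acc)) a l).
Proof.
elim: l a k => [|h t IH] a k /=.
  move=> _; elim: k => //= k IH; by rewrite IH /lstep /lstepT; simp.
case: k => // k; rewrite ltnS => Hk; rewrite iterSr.
have -> : lstep F (cpair (econs h (enc_list t)) a) = cpair (enc_list t) (F (cpair h a)).
  by rewrite /lstep /lstepT; simp.
exact: IH.
Qed.

Definition dstepT :=
  TIf X0
   (TIf X2 (mk5 (K 1) X1 X2 X3 (TCons X1 X4))
        (TIf X3 (mk5 TZ TZ (TPred X2) (TPred X2) (TCons X1 X4))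
            (TIf (TPred X3) (mk5 TZ (TS X1) (TPred X2) (TPred X2) X4)
                 (mk5 TZ X1 (TPred X2) (TPred (TPred X3)) X4))))
   TEnv.
Definition dstep := sem dstepT.
Arguments dstep : simpl never.
Lemma cmp_dstep : cmp dstep. Proof. apply: cmp_tm => /=; tauto. Qed.
Definition decodeR := sem (TLet (TIter TEnv (mk5 TZ TZ (TPred TEnv) (TPred TEnv) TZ) dstep) X4).
Arguments decodeR : simpl never.
Lemma cmp_decodeR : cmp decodeR.
Proof. apply: cmp_tm => /=; do !split; exact: cmp_dstep. Qed.

Lemma dstep_done v q r acc k : iter k dstep (st5 1 v q r acc) = st5 1 v q r acc.
Proof. elim: k => //= k ->; by rewrite /dstep /dstepT; simp. Qed.

Lemma dstep_run q v r acc k :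
  exists v' q' r', iter (q.+1 + k) dstep (st5 0 v q r (enc_list acc)) =
     st5 1 v' q' r' (enc_list (rev (CodeSeq.decode_rec v q r) ++ acc)).
Proof.
elim: q v r acc => [|q IH] v r acc.
  rewrite add1n iterSr.
  have -> : dstep (st5 0 v 0 r (enc_list acc)) = st5 1 v 0 r (enc_list (v :: acc)).
    by rewrite /dstep /dstepT; simp.
  by exists v, 0, r; rewrite dstep_done.
rewrite addSn iterSr.
case: r => [|[|r]].
- have [v' [q' [r' E]]] := IH 0 q (v :: acc).
  exists v', q', r'.
  have -> : dstep (st5 0 v q.+1 0 (enc_list acc)) = st5 0 0 q q (enc_list (v :: acc)).
    by rewrite /dstep /dstepT; simp.
  by rewrite E /= rev_cons cat_rcons.
- have [v' [q' [r' E]]] := IH v.+1 q acc.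
  exists v', q', r'.
  have -> : dstep (st5 0 v q.+1 1 (enc_list acc)) = st5 0 v.+1 q q (enc_list acc).
    by rewrite /dstep /dstepT; simp.
  by rewrite E.
- have [v' [q' [r' E]]] := IH v r acc.
  exists v', q', r'.
  have -> : dstep (st5 0 v q.+1 r.+2 (enc_list acc)) = st5 0 v q r (enc_list acc).
    by rewrite /dstep /dstepT; simp.
  by rewrite E.
Qed.

Lemma decodeRE n : decodeR n = enc_list (rev (CodeSeq.decode n)).
Proof.
rewrite /decodeR /=. case: n => [|n] /=; first by simp.
have [v' [q' [r' E]]] := dstep_run n 0 n [::] 0.
rewrite addn0 /= in E.
have -> : cpair 0 (cpair 0 (cpair n (cpair n 0))) = st5 0 0 n n (enc_list [::]) by [].
rewrite E /st5; simp. by rewrite cats0.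
Qed.





Create HintDb cmpdb.
#[export] Hint Resolve cmp_dstep cmp_decodeR cmp_subf cmp_predf cmp_lstep : cmpdb.
Ltac okt := apply: cmp_tm; rewrite /=; repeat split; auto with cmpdb.

Fixpoint encp (p : prog) : nat :=
  match p with
  | PZero => cpair 0 0 | PSucc => cpair 1 0 | PId => cpair 2 0
  | PFst => cpair 3 0 | PSnd => cpair 4 0
  | PComp f g => cpair 5 (cpair (encp f) (encp g))
  | PPair f g => cpair 6 (cpair (encp f) (encp g))
  | PRec f g => cpair 7 (cpair (encp f) (encp g))
  | PMu f => cpair 8 (encp f)
  end.
Definition encopt (o : option prog) := if o is Some p then S (encp p) else 0.

Definition lastF := sem (TS X0).
Arguments lastF : simpl never.
Lemma cmp_lastF : cmp lastF. Proof. okt. Qed.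
#[export] Hint Resolve cmp_lastF : cmpdb.
Definition ohdf := sem (TLet (TApp decodeR TEnv) (TSnd (TIter TEnv (TPair TEnv TZ) (lstep lastF)))).
Arguments ohdf : simpl never.
Lemma cmp_ohdf : cmp ohdf. Proof. okt. Qed.
#[export] Hint Resolve cmp_ohdf : cmpdb.

Lemma ohdfE m : ohdf m = if ohead (CodeSeq.decode m) is Some x then S x else 0.
Proof.
rewrite /ohdf; simp; rewrite decodeRE lfold ?enc_list_size //; simp.
case: (CodeSeq.decode m) => //= x l. rewrite rev_cons foldl_rcons /lastF. by simp.
Qed.

Lemma pmap_Some (s : seq nat) : pmap Some s = s.
Proof. by elim: s => //= x s ->. Qed.

Definition ohd (m : nat) : option nat := ohead (pmap Some (CodeSeq.decode m)).
Definition usum (k : nat) : option (nat + nat) :=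
  match CodeSeq.decode k with
  | [:: ni; nx] => sum_of_opair (ohd ni, ohd nx)
  | _ => None end.
Lemma unpickleE n : (unpickle n : option (GenTree.tree nat)) = GenTree.decode (pmap usum (CodeSeq.decode n)).
Proof. rewrite /unpickle /= /pcomp /=. congr GenTree.decode. apply: eq_pmap => k.
 rewrite /unpickle /= /pcomp /= /unpickle /= /usum.
 rewrite /pcomp /unpickle /= /unpickle_tagged /=.
 case: (CodeSeq.decode k) => [|a [|b [|c l]]] //=.
Qed.

Definition encsum (o : option (nat + nat)) :=
  match o with None => 0 | Some (inl n) => S (cpair 0 n) | Some (inr y) => S (cpair 1 y) end.

Definition usumT :=
  TLet (TApp decodeR TEnv)
   (TIf TEnv TZ (TIf (TTl TEnv) TZ (TIf (TTl (TTl TEnv))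
     (TIf (TApp ohdf (THd TEnv))
        (TIf (TApp ohdf (THd (TTl TEnv))) TZ (TS (TPair TZ (TPred (TApp ohdf (THd (TTl TEnv)))))))
        (TS (TPair (K 1) (TPred (TApp ohdf (THd TEnv))))))
     TZ))).
Definition usumf := sem usumT.
Arguments usumf : simpl never.
Lemma cmp_usumf : cmp usumf. Proof. okt; exact: okK. Qed.
#[export] Hint Resolve cmp_usumf : cmpdb.

Lemma ohdE m : ohd m = ohead (CodeSeq.decode m).
Proof. rewrite /ohd; by case: (CodeSeq.decode m). Qed.

Lemma usumfE k : usumf k = encsum (usum k).
Proof.
rewrite /usumf /usum /usumT; simp; rewrite decodeRE.
case E: (CodeSeq.decode k) => [|a [|b [|c l]]]; try done.
- have -> : rev [:: a] = [:: a] by [].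
  by simp.
- have -> : rev [:: a; b] = [:: b; a] by [].
  simp. rewrite !ohdE !ohdfE.
  by case: (ohead (CodeSeq.decode a)) => [x|]; case: (ohead (CodeSeq.decode b)) => [y|].
- have : 3 <= size (rev [:: a, b, c & l]) by rewrite size_rev.
  case: (rev _) => [|x [|y [|z w]]] // _; by simp.
Qed.


Definition nodeP (n : nat) (l : seq (option prog)) : option prog :=
  match n, l with
  | 0, [::] => Some PZero | 1, [::] => Some PSucc | 2, [::] => Some PId
  | 3, [::] => Some PFst | 4, [::] => Some PSnd
  | 5, [:: Some f; Some g] => Some (PComp f g)
  | 6, [:: Some f; Some g] => Some (PPair f g)
  | 7, [:: Some f; Some g] => Some (PRec f g)
  | 8, [:: Some f] => Some (PMu f)
  | _, _ => None
  end.

Lemma tree_to_progE n ts : tree_to_prog (GenTree.Node n ts) = nodeP n (map tree_to_prog ts).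
Proof.
do 9 (try case: n => [|n]); case: ts => [|a [|b [|c l]]] //=;
  by case: (tree_to_prog a) => [?|]; try case: (tree_to_prog b) => [?|].
Qed.

Definition zeroB k := TIf Y1 (TS (TPair (K k) TZ)) TZ.
Definition twoB k := TIf Y1 TZ (TIf (TTl Y1) TZ (TIf (TTl (TTl Y1))
   (TIf (THd Y1) TZ (TIf (THd (TTl Y1)) TZ
      (TS (TPair (K k) (TPair (TPred (THd Y1)) (TPred (THd (TTl Y1)))))))) TZ)).
Definition oneB := TIf Y1 TZ (TIf (TTl Y1) (TIf (THd Y1) TZ (TS (TPair (K 8) (TPred (THd Y1))))) TZ).
Definition nodeconvT :=
  TCaseN X0 [:: zeroB 0; zeroB 1; zeroB 2; zeroB 3; zeroB 4; twoB 5; twoB 6; twoB 7; oneB] TZ.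
Definition nodeconv := sem nodeconvT.
Arguments nodeconv : simpl never.
Lemma cmp_nodeconv : cmp nodeconv. Proof. okt; exact: okK. Qed.
#[export] Hint Resolve cmp_nodeconv : cmpdb.

Lemma nodeconvE n l : nodeconv (cpair n (enc_list (map encopt l))) = encopt (nodeP n l).
Proof.
rewrite /nodeconv /nodeconvT /zeroB /twoB /oneB.
do 9 (try case: n => [|n]); case: l => [|a [|b [|c l]]]; try case: a => [a|]; try case: b => [b|]; simp; by rewrite ?semK.
Qed.

Definition FS1 := TFst Y1.
Definition FS2 := TSnd Y1.
Definition fstepT :=
  TLet (TPair (TApp usumf X0) Y1)
   (TIf X0 Y1 (TIf (TFst (TPred X0))
      (TIf (TSnd (TPred X0)) (TPair TZ (TCons FS1 FS2))
         (TPair (TCons (TApp nodeconv (TPair (TPred (TSnd (TPred X0))) FS1)) (THd FS2)) (TTl FS2)))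
      (TPair (TCons TZ FS1) FS2))).
Definition fstep := sem fstepT.
Arguments fstep : simpl never.
Lemma cmp_fstep : cmp fstep. Proof. okt. Qed.
#[export] Hint Resolve cmp_fstep : cmpdb.

Definition encT (ts : seq (GenTree.tree nat)) := enc_list (map encopt (map tree_to_prog ts)).
Definition encState (fs : seq (GenTree.tree nat) * seq (seq (GenTree.tree nat))) :=
  cpair (encT fs.1) (enc_list (map encT fs.2)).

Lemma fstepE k fs : fstep (cpair k (encState fs)) =
  match usum k with None => encState fs | Some c => encState (@GenTree.decode_step nat c fs) end.
Proof.
rewrite /fstep /fstepT /FS1 /FS2; simp; rewrite usumfE.
case: (usum k) => [[[|n]|y]|]; rewrite /encState /=; simp => //.
rewrite -/(encT _) nodeconvE -tree_to_progE.
by case: fs.2 => [|a l]; simp.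
Qed.

Lemma foldE s : foldr (fun x z => fstep (cpair x z)) (encState ([::], [::])) s =
  encState (foldr (@GenTree.decode_step nat) ([::], [::]) (pmap usum s)).
Proof.
elim: s => //= x s IH. rewrite IH fstepE. by case: (usum x).
Qed.

Definition treeDecT :=
  TLet (TApp decodeR TEnv) (TLet (TFst (TSnd (TIter TEnv (TPair TEnv (TPair TZ TZ)) (lstep fstep))))
    (TIf TEnv (TPair TZ TZ) (TIf (THd TEnv) (TPair TZ TZ) (TPred (THd TEnv))))).
Definition treeDec := sem treeDecT.
Arguments treeDec : simpl never.
Lemma cmp_treeDec : cmp treeDec. Proof. okt. Qed.
#[export] Hint Resolve cmp_treeDec : cmpdb.

Lemma treeDecE g : treeDec g = encp (prog_of g).
Proof.
rewrite /treeDec /treeDecT; simp; rewrite decodeRE lfold ?enc_list_size //; simp.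
rewrite foldl_rev.
have -> : cpair 0 0 = encState ([::], [::]) by [].
rewrite foldE /prog_of unpickleE /GenTree.decode /encState; simp.
case: (foldr _ _ _) => [[|t l] l2] //=; rewrite /encT /=; simp.
by case: (tree_to_prog t).
Qed.


Definition Ev p x := cpair 0 (cpair p x).
Definition KComp f := cpair 1 f.
Definition KPair := cpair 2 0.
Definition KRec g i n y := cpair 3 (cpair g (cpair i (cpair n y))).
Definition KMu f i x := cpair 4 (cpair f (cpair i x)).
Definition st (K V : seq nat) := cpair (enc_list K) (enc_list V).

Definition EvT p x := TPair TZ (TPair p x).
Definition PA := TSnd X0.
Definition EVB :=
  TCaseN (TFst X0) [::
    TPair X2 (TCons TZ Y3);
    TPair X2 (TCons (TS X1) Y3);
    TPair X2 (TCons X1 Y3);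
    TPair X2 (TCons (TFst X1) Y3);
    TPair X2 (TCons (TSnd X1) Y3);
    TPair (TCons (EvT (TSnd PA) X1) (TCons (TPair (K 1) (TFst PA)) X2)) Y3;
    TPair (TCons (EvT (TFst PA) X1) (TCons (EvT (TSnd PA) X1) (TCons (TPair (K 2) TZ) X2))) Y3;
    TPair (TCons (EvT (TFst PA) (TSnd X1)) (TCons (TPair (K 3) (TPair (TSnd PA) (TPair TZ (TPair (TFst X1) (TSnd X1))))) X2)) Y3;
    TPair (TCons (EvT PA (TPair TZ X1)) (TCons (TPair (K 4) (TPair PA (TPair TZ X1))) X2)) Y3]
  (TPair X2 Y3).
Definition DD := TSnd X0.
Definition KK := X1.
Definition VV := Y2.
Definition BODY :=
  TCaseN (TFst X0) [::
    TLet (TPair (TFst DD) (TPair (TSnd DD) (TPair KK VV))) EVB;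
    TPair (TCons (EvT DD (THd VV)) KK) (TTl VV);
    TPair KK (TCons (TPair (THd (TTl VV)) (THd VV)) (TTl (TTl VV)));
    TIf (TApp subf (TPair (TFst (TSnd (TSnd DD))) (TFst (TSnd DD)))) (TPair KK VV)
       (TPair (TCons (EvT (TFst DD) (TPair (TPair (TFst (TSnd DD)) (THd VV)) (TSnd (TSnd (TSnd DD)))))
                (TCons (TPair (K 3) (TPair (TFst DD) (TPair (TS (TFst (TSnd DD))) (TSnd (TSnd DD))))) KK))
              (TTl VV));
    TIf (THd VV) (TPair KK (TCons (TFst (TSnd DD)) (TTl VV)))
       (TPair (TCons (EvT (TFst DD) (TPair (TS (TFst (TSnd DD))) (TSnd (TSnd DD))))
                (TCons (TPair (K 4) (TPair (TFst DD) (TPair (TS (TFst (TSnd DD))) (TSnd (TSnd DD))))) KK))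
              (TTl VV))]
  (TPair KK VV).
Definition stepT := TIf (TFst TEnv) TEnv
   (TLet (TPair (THd (TFst TEnv)) (TPair (TTl (TFst TEnv)) (TSnd TEnv))) BODY).
Definition step := sem stepT.
Arguments step : simpl never.
Lemma cmp_step : cmp step. Proof. okt; exact: okK. Qed.
#[export] Hint Resolve cmp_step : cmpdb.

Ltac stp := rewrite /step /stepT /BODY /EVB /DD /KK /VV /PA /EvT /st /Ev /KComp /KPair /KRec /KMu; simp.

Lemma step_nil V : step (st [::] V) = st [::] V.
Proof. by stp. Qed.

Definition reach s s' := exists n, iter n step s = s'.
Lemma reach_refl s : reach s s. Proof. by exists 0. Qed.
Lemma reach_trans s1 s2 s3 : reach s1 s2 -> reach s2 s3 -> reach s1 s3.
Proof. move=> [n <-] [m <-]; exists (m + n); by rewrite iterD. Qed.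
Lemma reach_step s s' s'' : step s = s' -> reach s' s'' -> reach s s''.
Proof. move=> E [n <-]; exists n.+1; by rewrite iterSr E. Qed.

Lemma step_zero x K V : step (st (Ev (encp PZero) x :: K) V) = st K (0 :: V).
Proof. by stp. Qed.
Lemma step_succ x K V : step (st (Ev (encp PSucc) x :: K) V) = st K (x.+1 :: V).
Proof. by stp. Qed.
Lemma step_id x K V : step (st (Ev (encp PId) x :: K) V) = st K (x :: V).
Proof. by stp. Qed.
Lemma step_fst x K V : step (st (Ev (encp PFst) x :: K) V) = st K (cfst x :: V).
Proof. by stp. Qed.
Lemma step_snd x K V : step (st (Ev (encp PSnd) x :: K) V) = st K (csnd x :: V).
Proof. by stp. Qed.
Lemma step_comp f g x K V : step (st (Ev (encp (PComp f g)) x :: K) V) =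
  st (Ev (encp g) x :: KComp (encp f) :: K) V.
Proof. by stp. Qed.
Lemma step_kcomp f u K V : step (st (KComp f :: K) (u :: V)) = st (Ev f u :: K) V.
Proof. by stp. Qed.
Lemma step_pair f g x K V : step (st (Ev (encp (PPair f g)) x :: K) V) =
  st (Ev (encp f) x :: Ev (encp g) x :: KPair :: K) V.
Proof. by stp. Qed.
Lemma step_kpair a b K V : step (st (KPair :: K) (b :: a :: V)) = st K (cpair a b :: V).
Proof. by stp. Qed.
Lemma step_rec f g x K V : step (st (Ev (encp (PRec f g)) x :: K) V) =
  st (Ev (encp f) (csnd x) :: KRec (encp g) 0 (cfst x) (csnd x) :: K) V.
Proof. by stp. Qed.
Lemma step_krec_done g n y r K V : step (st (KRec g n n y :: K) (r :: V)) = st K (r :: V).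
Proof. by stp; rewrite subfE subnn. Qed.
Lemma step_krec g i n y r K V : i < n -> step (st (KRec g i n y :: K) (r :: V)) =
  st (Ev g (cpair (cpair i r) y) :: KRec g i.+1 n y :: K) V.
Proof. move=> H; stp; rewrite subfE. by move: H; rewrite -subn_gt0; case: (n - i). Qed.
Lemma step_mu f x K V : step (st (Ev (encp (PMu f)) x :: K) V) =
  st (Ev (encp f) (cpair 0 x) :: KMu (encp f) 0 x :: K) V.
Proof. by stp. Qed.
Lemma step_kmu0 f i x K V : step (st (KMu f i x :: K) (0 :: V)) = st K (i :: V).
Proof. by stp. Qed.
Lemma step_kmuS f i x k K V : step (st (KMu f i x :: K) (k.+1 :: V)) =
  st (Ev f (cpair i.+1 x) :: KMu f i.+1 x :: K) V.
Proof. by stp. Qed.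

Lemma complete_eval p x v (H : eval p x v) : forall K V,
  reach (st (Ev (encp p) x :: K) V) (st K (v :: V))
with complete_rec f g m y v (H : evalrec f g m y v) : forall N K V, m <= N ->
  reach (st (Ev (encp f) y :: KRec (encp g) 0 N y :: K) V) (st (KRec (encp g) m N y :: K) (v :: V)).
Proof.
- case: H.
  + move=> x0 K V; apply: reach_step; first exact: step_zero. exact: reach_refl.
  + move=> x0 K V; apply: reach_step; first exact: step_succ. exact: reach_refl.
  + move=> x0 K V; apply: reach_step; first exact: step_id. exact: reach_refl.
  + move=> x0 K V; apply: reach_step; first exact: step_fst. exact: reach_refl.
  + move=> x0 K V; apply: reach_step; first exact: step_snd. exact: reach_refl.
  + move=> f g x0 u v0 Hg Hf K V; apply: reach_step; first exact: step_comp.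
    apply: reach_trans; first exact: (complete_eval _ _ _ Hg).
    apply: reach_step; first exact: step_kcomp.
    exact: (complete_eval _ _ _ Hf).
  + move=> f g x0 a b Hf Hg K V; apply: reach_step; first exact: step_pair.
    apply: reach_trans; first exact: (complete_eval _ _ _ Hf).
    apply: reach_trans; first exact: (complete_eval _ _ _ Hg).
    apply: reach_step; first exact: step_kpair. exact: reach_refl.
  + move=> f g x0 v0 Hr K V; apply: reach_step; first exact: step_rec.
    apply: reach_trans; first exact: (complete_rec _ _ _ _ _ Hr (cfst x0) K V (leqnn _)).
    apply: reach_step; first exact: step_krec_done. exact: reach_refl.
  + move=> f x0 n H0 Hlt K V; apply: reach_step; first exact: step_mu.
    have Hm : forall m, m <= n -> reach (st (Ev (encp f) (cpair 0 x0) :: KMu (encp f) 0 x0 :: K) V)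
                                       (st (Ev (encp f) (cpair m x0) :: KMu (encp f) m x0 :: K) V).
      elim=> [|m IHm] Hmn; first exact: reach_refl.
      apply: reach_trans; first exact: (IHm (ltnW Hmn)).
      case: (Hlt m Hmn) => k E.
      apply: reach_trans; first exact: (complete_eval _ _ _ E).
      apply: reach_step; first exact: step_kmuS. exact: reach_refl.
    apply: reach_trans; first exact: (Hm n (leqnn n)).
    apply: reach_trans; first exact: (complete_eval _ _ _ H0).
    apply: reach_step; first exact: step_kmu0. exact: reach_refl.
- case: H.
  + move=> f0 g0 y0 v0 Hf N K V _. exact: (complete_eval _ _ _ Hf).
  + move=> f0 g0 n y0 r v0 Hr Hg N K V HN.
    apply: reach_trans; first exact: (complete_rec _ _ _ _ _ Hr N K V (ltnW HN)).
    apply: reach_step; first exact: step_krec.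
    exact: (complete_eval _ _ _ Hg).
Qed.


Lemma eval_det p x v (H : eval p x v) : forall w, eval p x w -> v = w
with evalrec_det f g n y v (H : evalrec f g n y v) : forall w, evalrec f g n y w -> v = w.
Proof.
- case: H.
  + by move=> x0 w H'; inversion H'.
  + by move=> x0 w H'; inversion H'.
  + by move=> x0 w H'; inversion H'.
  + by move=> x0 w H'; inversion H'.
  + by move=> x0 w H'; inversion H'.
  + move=> f g x0 u v0 Hg Hf w H'; inversion H'; subst.
    match goal with H1 : eval g x0 ?u', H2 : eval f ?u' w |- _ =>
      have E := eval_det _ _ _ Hg _ H1; subst; exact: (eval_det _ _ _ Hf _ H2) end.
  + move=> f g x0 a b Hf Hg w H'; inversion H'; subst.
    match goal with H1 : eval f x0 ?a', H2 : eval g x0 ?b' |- _ =>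
      by rewrite (eval_det _ _ _ Hf _ H1) (eval_det _ _ _ Hg _ H2) end.
  + move=> f g x0 v0 Hr w H'; inversion H'; subst.
    match goal with H1 : evalrec f g _ _ w |- _ => exact: (evalrec_det _ _ _ _ _ Hr _ H1) end.
  + move=> f x0 n H0 Hlt w H'; inversion H'; subst.
    case: (ltngtP n w) => // Hnw;
    [ case: (H2 n Hnw) => k E; by have := eval_det _ _ _ H0 _ E
    | case: (Hlt w Hnw) => k E; by have := eval_det _ _ _ E _ H1 ].
- case: H.
  + move=> f0 g0 y0 v0 Hf w H'; inversion H'; subst.
    match goal with H1 : eval f0 y0 w |- _ => exact (eval_det _ _ _ Hf _ H1) end.
  + move=> f0 g0 n0 y0 r v0 Hr Hg w H'; inversion H'; subst.
    match goal with H1 : evalrec f0 g0 n0 y0 ?r', H2 : eval g0 _ w |- _ =>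
      have Er := evalrec_det _ _ _ _ _ Hr _ H1; subst; exact: (eval_det _ _ _ Hg _ H2) end.
Qed.

Lemma step_halt s : cfst s = 0 -> step s = s.
Proof. move=> H; rewrite /step /stepT; simp; by rewrite H. Qed.

Lemma iter_halt s k : cfst s = 0 -> iter k step s = s.
Proof. move=> H; elim: k => //= k ->; exact: step_halt. Qed.

Definition INIT := TPair (TCons (EvT (TApp treeDec Y1) Y1) TZ) TZ.
Definition init x := st [:: Ev (treeDec x) x] [::].

Section Main.
Variables (dfun : nat -> nat) (a b : nat).
Hypothesis cmp_dfun : cmp dfun.

Definition FT := TIf (TApp dfun Y1) TZ (TFst (TIter X0 INIT step)).
Definition PT := TLet (TPair (TApp dfun Y1) (THd (TSnd (TIter X0 INIT step))))
  (TIf X0 (K a) (TIf (TApp subf (TPair Y1 (K a))) (TIf (TApp subf (TPair (K a) Y1)) (K b) (K a)) (K a))).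

Lemma FTE n x : sem FT (cpair n x) = if dfun x is 0 then 0 else cfst (iter n step (init x)).
Proof. rewrite /FT /INIT /EvT /init /st /Ev; simp. by case: (dfun x). Qed.

Lemma PTE n x : sem PT (cpair n x) =
  if dfun x is 0 then a else
   (let w := cfst (csnd (iter n step (init x))).-1 in if (w == a) then b else a).
Proof.
rewrite /PT /INIT /EvT /init /st /Ev; simp. case: (dfun x) => [|k]; simp; rewrite ?semK //.
rewrite !subfE. set w := cfst _.
case: ifP => [/eqP ->|]; first by rewrite subnn.
move=> /negbT; rewrite neq_ltn => /orP [] H.
- by move: (H); rewrite -subn_gt0; case: (a - w) => // k' _; rewrite (_ : w - a = 0) ?semK //; apply/eqP; rewrite subn_eq0 ltnW.
- by rewrite -subn_gt0 in H; case: (w - a) H.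
Qed.

Lemma cmp_FT : cmp (sem FT). Proof. apply: cmp_tm; rewrite /=; repeat split; auto with cmpdb. Qed.
Lemma cmp_PT : cmp (sem PT). Proof. apply: cmp_tm; rewrite /=; repeat split; auto with cmpdb; exact: okK. Qed.

End Main.

Lemma prog_of_pickle p : prog_of (pickle (prog_to_tree p)) = p.
Proof. by rewrite /prog_of pickleK /= prog_to_treeK. Qed.

Lemma st_nil_fst V : cfst (st [::] V) = 0.
Proof. by rewrite /st cfst_pair. Qed.

Unset Implicit Arguments.
Theorem mainTheorem9 (SafeInstance : nat -> Prop) :
  (exists a b, a <> b /\ SafeInstance a /\ SafeInstance b) ->
  ~ (exists L : nat -> Prop, captures L (total_into SafeInstance)).
Proof.
move=> [a [b [hab [Sa Sb]]]] [L [[d Hd] [Hsound Hcover]]].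
pose dfun x := if excluded_middle_informative (L x) then 1 else 0.
have cd : cmp dfun.
  exists (prog_of d) => x; rewrite /dfun; case: excluded_middle_informative => h.
  - exact: (Hd x).1 h.
  - exact: (Hd x).2 h.
have d1 : forall x, L x -> dfun x = 1.
  by move=> x h; rewrite /dfun; case: excluded_middle_informative.
have d0 : forall x, ~ L x -> dfun x = 0.
  by move=> x h; rewrite /dfun; case: excluded_middle_informative.
clearbody dfun.
have [pF HF] := cmp_FT cd.
have [pP HP] := cmp_PT a b cd.
pose H := PComp pP (PPair (PMu pF) PId).
have key : forall x, exists n, sem (FT dfun) (cpair n x) = 0 /\
    forall m, m < n -> exists k, sem (FT dfun) (cpair m x) = S k.
  move=> x.
  have ex : exists n, sem (FT dfun) (cpair n x) == 0.
    case: (excluded_middle_informative (L x)) => h.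
    - have [[w Hw] _] := Hsound x h x.
      have [n En] := complete_eval Hw [::] [::].
      exists n; rewrite FTE d1 //.
      by rewrite /init treeDecE En st_nil_fst.
    - by exists 0; rewrite FTE d0.
  case: (ex_minnP ex) => n /eqP Hn Hmin; exists n; split => // m Hm.
  case E: (sem (FT dfun) (cpair m x)) => [|k]; last by exists k.
  by have := Hmin m (introT eqP E); rewrite leqNgt Hm.
have evH : forall x, exists n, (sem (FT dfun) (cpair n x) = 0) /\ eval H x (sem (PT dfun a b) (cpair n x)).
  move=> x; have [n [Hn Hlt]] := key x; exists n; split => //.
  econstructor; last exact: HP.
  constructor; last by constructor.
  constructor; first by rewrite -Hn.
  move=> m Hm; have [k Hk] := Hlt m Hm; exists k; rewrite -Hk; exact: HF.
pose gH := pickle (prog_to_tree H).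
have phiH : forall x v, phi gH x v <-> eval H x v by move=> x v; rewrite /phi prog_of_pickle.
have totH : total_into SafeInstance gH.
  move=> x; have [n [_ Ev]] := evH x; split.
  - by exists (sem (PT dfun a b) (cpair n x)); apply/phiH.
  - move=> v /phiH Hv; rewrite -(eval_det Ev Hv) PTE.
    case: (dfun x) => // _ /=; by case: ifP.
have [g [Lg Hsame]] := Hcover gH totH.
have dg : dfun g = 1 by exact: d1.
have [n [Fn Ev]] := evH g.
set v := sem (PT dfun a b) (cpair n g) in Ev.
have Hv : phi g g v by apply/Hsame/phiH.
have [m Em] := complete_eval Hv [::] [::].
rewrite -treeDecE -/(init g) in Em.
rewrite FTE dg in Fn.
have En : iter n step (init g) = st [::] [:: v].
  case: (leqP m n) => Hmn.
  - rewrite -(subnK Hmn) iterD Em iter_halt //; exact: st_nil_fst.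
  - by rewrite -Em -(subnK (ltnW Hmn)) iterD (@iter_halt (iter n step (init g))).

move: (erefl v); rewrite {2}/v PTE dg En; clearbody v; rewrite /st /= csnd_pair /econs /= cfst_pair.
case: ifP => [/eqP -> E | /negbT /eqP Hna E]; [exact: hab E | exact: Hna E].
Qed.
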